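(* Let $u_0 \ge 1$ and $r \ge 1$ be integers with $\gcd(u_0, r) = 1$, let $u_k := u_0 + kr$ for $k \ge 0$, and for an integer $n \ge 0$ let $L_n := \operatorname{lcm}\{u_0, u_1, \ldots, u_n\}$. Let $a \ge 2$ be any given integer. Then for any integers $\alpha \ge a$, $r \ge a$ and $n \ge 2\alpha r$, we have $$L_n \ge u_0\, r^{\alpha + a - 2}\,(r+1)^n.$$
   Context: The arithmetic progression is $u_k = u_0 + kr$ with $u_0, r$ positive coprime integers; $L_n$ is the least common multiple of its first $n+1$ terms $u_0,\dots,u_n$. *)

(* Defs.v *)
From mathcomp Require Import all_boot.
Set Implicit Arguments. Unset Strict Implicit. Unset Printing Implicit Defensive.

Definition u (u0 r k : nat) : nat := u0 + k * r.

Definition L (u0 r n : nat) : nat := \big[lcmn/1]_(0 <= k < n.+1) u u0 r k.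

(* Main.v *)
Require Import Defs.
From mathcomp Require Import all_boot.
From mathcomp Require Import zify ring.

Definition P (u0 r k m : nat) := \prod_(j < m.+1) u u0 r (k + j).

Lemma Pshift u0 r k m :
  P u0 r k m * u u0 r (k + m.+1) = u u0 r k * P u0 r k.+1 m.
Proof.
rewrite /P.
have -> : \prod_(j < m.+1) u u0 r (k + j) * u u0 r (k + m.+1)
        = \prod_(j < m.+2) u u0 r (k + j) by rewrite [RHS]big_ord_recr.
rewrite big_ord_recl addn0; congr (_ * _).
by apply: eq_bigr => j _; have -> : k + bump 0 j = k.+1 + j by rewrite /bump /= add1n addSnnS.
Qed.

Lemma Pdiv u0 r M : forall m k, (forall j, j <= m -> u u0 r (k + j) %| M) ->
  P u0 r k m %| m`! * r ^ m * M.
Proof.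
elim=> [|m IH] k H.
  by rewrite /P big_ord1 fact0 expn0 !mul1n; apply: (H 0).
have /dvdnP [a Ha] : P u0 r k m %| m`! * r ^ m * M.
  by apply: IH => j Hj; apply: H; apply: leqW.
have /dvdnP [b Hb] : P u0 r k.+1 m %| m`! * r ^ m * M.
  by apply: IH => j Hj; rewrite addSnnS; apply: H.
have E1 : P u0 r k m.+1 = P u0 r k m * u u0 r (k + m.+1).
  by rewrite /P big_ord_recr.
have E2 : P u0 r k m.+1 = u u0 r k * P u0 r k.+1 m.
  by rewrite E1 Pshift.
have Hu : u u0 r (k + m.+1) = u u0 r k + m.+1 * r by rewrite /u; lia.
have Ea : P u0 r k m.+1 * a = m`! * r ^ m * M * u u0 r (k + m.+1).
  by rewrite E1 Ha; ring.
have Eb : P u0 r k m.+1 * b = m`! * r ^ m * M * u u0 r k.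
  by rewrite E2 Hb; ring.
have -> : m.+1`! * r ^ m.+1 * M = P u0 r k m.+1 * a - P u0 r k m.+1 * b.
  rewrite Ea Eb Hu factS expnS; set X := m`! * r ^ m * M.
  rewrite mulnDr addKn /X; ring.
by apply: dvdn_sub; apply: dvdn_mulr.
Qed.

Lemma u_dvd_L u0 r n i : i <= n -> u u0 r i %| L u0 r n.
Proof.
elim: n => [|n IH] Hi.
  by move: Hi; rewrite leqn0 => /eqP ->; rewrite /L big_nat1.
rewrite /L big_nat_recr //= -/(L u0 r n).
case: (ltnP i n.+1) => Hin.
  by apply: dvdn_trans (dvdn_lcml _ _); apply: IH.
have -> : i = n.+1 by lia.
exact: dvdn_lcmr.
Qed.

Lemma L_gt0 u0 r n : 0 < u0 -> 0 < L u0 r n.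
Proof.
move=> H; rewrite /L; elim/big_ind: _ => //.
  by move=> x y Hx Hy; rewrite lcmn_gt0 Hx Hy.
by move=> i _; rewrite /u; lia.
Qed.

Lemma u_coprime u0 r i : coprime u0 r -> coprime (u u0 r i) r.
Proof.
move=> H; rewrite /u /coprime gcdnC addnC gcdnMDl gcdnC; exact: H.
Qed.

Lemma fact_dvd m n : m <= n -> m`! %| n`!.
Proof.
elim: n => [|n IH]; first by rewrite leqn0 => /eqP ->.
rewrite leq_eqVlt => /orP [/eqP -> //|Hm].
by rewrite factS; apply: dvdn_mull; apply: IH.
Qed.

Lemma pow_dvd_fact r e : 0 < r -> r ^ e %| (e * r)`!.
Proof.
move=> Hr; elim: e => [|e IH]; first by rewrite expn0 dvd1n.
have -> : e.+1 * r = (e * r + r.-1).+1 by lia.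
rewrite factS expnS; apply: dvdn_mul.
  by apply/dvdnP; exists e.+1; lia.
by apply: dvdn_trans IH _; apply: fact_dvd; lia.
Qed.


Lemma grow u0 r n : 1 <= u0 -> 1 <= r -> exists k m, [/\ k + m = n,
  n.+1 <= u0 + (r+1)*k, (r+1)*k <= n + r &
  u0 * (r+1)^n * m`! <= P u0 r k m].
Proof.
move=> Hu0 Hr; elim: n => [|n [k [m [Hkm H1 H2 H3]]]].
  exists 0, 0; split; [lia|lia|lia|].
  by rewrite /P big_ord1 expn0 fact0 /u; lia.
case: (ltnP (n.+1) (u0 + (r+1)*k)) => Hc.
  exists k, m.+1; split; [lia|lia|lia|].
  have -> : P u0 r k m.+1 = P u0 r k m * u u0 r (k + m.+1).
    by rewrite /P big_ord_recr.
  have -> : u0 * (r + 1) ^ n.+1 * m.+1`! = (u0 * (r+1)^n * m`!) * ((r+1) * m.+1).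
    by rewrite expnS factS; ring.
  apply: leq_mul H3 _; rewrite /u; nia.
have Heq : u0 + (r+1)*k = n.+1 by lia.
exists k.+1, m; split; [lia|lia|lia|].
have Hs := Pshift u0 r k m.
have Hu : u u0 r (k + m.+1) = (r+1) * u u0 r k by rewrite /u; nia.
have Hpos : 0 < u u0 r k by rewrite /u; lia.
have E : P u0 r k.+1 m = (r+1) * P u0 r k m.
  apply/eqP; rewrite -(eqn_pmul2l Hpos) -Hs Hu; apply/eqP; ring.
rewrite E expnS.
have -> : u0 * ((r + 1) * (r + 1) ^ n) * m`! = (r+1) * (u0 * (r + 1) ^ n * m`!) by ring.
by rewrite leq_pmul2l // addn1.
Qed.

Theorem theorem1p2 (u0 r a alpha n : nat) :
  1 <= u0 -> 1 <= r -> coprime u0 r ->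
  2 <= a -> a <= alpha -> a <= r -> 2 * alpha * r <= n ->
  u0 * r ^ (alpha + a - 2) * (r + 1) ^ n <= L u0 r n.
Proof.
move=> Hu0 Hr Hco Ha Haal Har Hn.
have [k [m [Hkm H1 H2 H3]]] := grow u0 r n Hu0 Hr.
set e := alpha + a - 2.
have He : e * r <= m.
  have Hx : (r+1) * e + 1 <= n.
    rewrite /e; nia.
  nia.
have Hd : P u0 r k m %| m`! * r ^ m * L u0 r n.
  apply: Pdiv => j Hj; apply: u_dvd_L; lia.
have HcoP : coprime (P u0 r k m) r.
  rewrite /P; elim/big_ind: _; first exact: coprime1n.
    by move=> x y Hx Hy; rewrite coprimeMl Hx Hy.
  by move=> j _; apply: u_coprime.
have Hd2 : P u0 r k m %| m`! * L u0 r n.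
  rewrite -(@Gauss_dvdl _ _ (r ^ m)); last by apply: coprimeXr.
  by rewrite mulnAC.
have /dvdnP [c Hc] : r ^ e %| m`!.
  by apply: dvdn_trans (@pow_dvd_fact r e Hr) _; apply: fact_dvd.
have Hd3 : P u0 r k m %| c * L u0 r n.
  rewrite -(@Gauss_dvdl _ _ (r ^ e)); last by apply: coprimeXr.
  by rewrite mulnAC -Hc.
have Hcpos : 0 < c.
  case: (posnP c) => // Hc0; move: (fact_gt0 m); rewrite Hc Hc0; lia.
have Hle : P u0 r k m <= c * L u0 r n.
  apply: dvdn_leq => //; rewrite muln_gt0 Hcpos; exact: L_gt0.
rewrite -(leq_pmul2l Hcpos); apply: leq_trans Hle.
apply: leq_trans H3; rewrite Hc; apply: eq_leq; ring.
Qed.
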